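(* Let $n\geq1$, $\eta\in\Omega$ and $u,v\in\mathbb N^2$. Then: (1) if $u\neq v$ then $\bar u\neq\bar v$; (2) $|\overline{T_\eta}|=\lambda_{2,n}$; (3) if $v_{j,\eta}=(l,0)$ or $v_{j,\eta}=(0,l)$, then $l\leq j$; (4) $\pi_i(w)\leq n$ for all $w\in T_\eta$ and $i\in\{1,2\}$; (5) if $v_{j,\eta}=(0,p)$, then for every $q$ with $1\leq q<p$ there exists $l<j$ with $v_{l,\eta}=(0,q)$; if $v_{j,\eta}=(p,0)$, then for every $q$ with $1\leq q<p$ there exists $l<j$ with $v_{l,\eta}=(q,0)$; (6) if $v_{j,\eta}=(0,l)$ then $\{v_{i,\eta}\}_{i=1}^j=\{(0,t)\}_{t=1}^l\cup\{(s,0)\}_{s=1}^{j-l}$, and if $v_{j,\eta}=(l,0)$ then $\{v_{i,\eta}\}_{i=1}^j=\{(0,t)\}_{t=1}^{j-l}\cup\{(s,0)\}_{s=1}^l$.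
   Context: $\pi_i$ denotes the $i$-th coordinate. $\Lambda_{2,n}=\{\alpha\in\mathbb N^2:1\leq\alpha_1+\alpha_2\leq n\}$, $\lambda_{2,n}=|\Lambda_{2,n}|=\binom{n+2}{2}-1$; $\bar v=\big(\binom{v_1}{\alpha_1}\binom{v_2}{\alpha_2}\big)_{\alpha\in\Lambda_{2,n}}$. $\Omega$ is the set of $\eta=(z,d_0,\ldots,d_r)$ with $z\in\{0,1\}$, $d_0=0$, $d_i\geq1$ ($1\leq i\leq r$), $\sum_{i=0}^rd_i=n$. For $j\in\{1,\ldots,n\}$, $t\in\{1,\ldots,r\}$ is unique with $\sum_{i=0}^{t-1}d_i<j\leq\sum_{i=0}^td_i$ and $c=j-\sum_{i=0}^{t-1}d_i$; $v_{j,\eta}=(\sum_{i\text{ odd},i<t}d_i+c,0)$ if $z=1,t$ odd; $(0,\sum_{i\text{ even},i<t}d_i+c)$ if $z=1,t$ even; $(0,\sum_{i\text{ odd},i<t}d_i+c)$ if $z=0,t$ odd; $(\sum_{i\text{ even},i<t}d_i+c,0)$ if $z=0,t$ even. $T_{j,\eta}=\{v_{j,\eta}+p(1,1):0\leq p\leq n-j\}$ ($1\leq j\leq n$), $T_{0,\eta}=\{(p,p):1\leq p\leq n\}$, $T_\eta=\bigcup_{j=0}^nT_{j,\eta}$, $\overline{T_\eta}=\{\bar w:w\in T_\eta\}$. *)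

(* Defs.v *)
From mathcomp Require Import all_boot.
Set Implicit Arguments. Unset Strict Implicit. Unset Printing Implicit Defensive.

Definition Lambda2 (n : nat) : seq (nat * nat) :=
  [seq a <- [seq (a1, a2) | a1 <- iota 0 n.+1, a2 <- iota 0 n.+1]
     | (1 <= a.1 + a.2 <= n)].

Definition lambda2 (n : nat) : nat := 'C(n.+2, 2) - 1.

(* \bar v = ( C(v1,a1) C(v2,a2) )_{a in Lambda_{2,n}}, as the vector of its
   coordinates listed along the fixed enumeration of Lambda_{2,n}. *)
Definition vbar (n : nat) (v : nat * nat) : seq nat :=
  [seq 'C(v.1, a.1) * 'C(v.2, a.2) | a <- Lambda2 n].

(* eta = (z, d_0, ..., d_r) is encoded by z : bool (z = 1 <-> true) and
   d = [:: d_0; d_1; ...; d_r] (so d_i = nth 0 d i, r = size d - 1). *)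
Definition Omega (n : nat) (z : bool) (d : seq nat) : bool :=
  [&& 0 < size d, nth 0 d 0 == 0, all (fun x => 0 < x) (behead d)
    & sumn d == n].

Definition psum (d : seq nat) (k : nat) : nat := \sum_(0 <= i < k) nth 0 d i.

(* the index t with psum d t < j <= psum d t.+1, i.e.
   sum_{i<t} d_i < j <= sum_{i<=t} d_i (the least such t) *)
Definition tidx (d : seq nat) (j : nat) : nat :=
  find (fun t => j <= psum d t.+1) (iota 0 (size d)).

Definition vje (z : bool) (d : seq nat) (j : nat) : nat * nat :=
  let t := tidx d j in
  let c := j - psum d t in
  let O := \sum_(0 <= i < t | odd i) nth 0 d i in
  let E := \sum_(0 <= i < t | ~~ odd i) nth 0 d i in
  if z then (if odd t then (O + c, 0) else (0, E + c))
  else (if odd t then (0, O + c) else (E + c, 0)).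

Definition T0 (n : nat) : seq (nat * nat) := [seq (p, p) | p <- iota 1 n].

Definition Tj (n : nat) (z : bool) (d : seq nat) (j : nat) : seq (nat * nat) :=
  [seq ((vje z d j).1 + p, (vje z d j).2 + p) | p <- iota 0 (n - j).+1].

(* T_eta = union_{j=0}^n T_{j,eta} (as a list; membership is what matters) *)
Definition Teta (n : nat) (z : bool) (d : seq nat) : seq (nat * nat) :=
  T0 n ++ flatten [seq Tj n z d j | j <- iota 1 n].

Definition Tbar (n : nat) (z : bool) (d : seq nat) : seq (seq nat) :=
  undup [seq vbar n w | w <- Teta n z d].

(* Main.v *)
Require Import Defs.
From mathcomp Require Import all_boot zify.

Lemma psum0 d : psum d 0 = 0.
Proof. by rewrite /psum big_geq. Qed.

Lemma psumS d k : psum d k.+1 = psum d k + nth 0 d k.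
Proof. by rewrite /psum big_nat_recr. Qed.

Lemma psum_mono d a b : a <= b -> psum d a <= psum d b.
Proof.
move=> ab; rewrite /psum [X in _ <= X](@big_cat_nat _ _ _ a) //=; exact: leq_addr.
Qed.

Lemma psum_size d : psum d (size d) = sumn d.
Proof. by rewrite /psum sumnE [RHS](big_nth 0). Qed.

Lemma tidx_spec d j : 0 < j -> j <= sumn d ->
  tidx d j < size d /\ psum d (tidx d j) < j /\ j <= psum d (tidx d j).+1.
Proof.
move=> j0 jn.
have sz : 0 < size d by case: d jn => //= ; lia.
have Hhas : has (fun t => j <= psum d t.+1) (iota 0 (size d)).
  apply/hasP; exists (size d).-1; first by rewrite mem_iota; lia.
  by rewrite prednK // psum_size.
have Hlt : tidx d j < size d.
  by rewrite /tidx -[X in _ < X](size_iota 0 (size d)) -has_find.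
split => //; split.
  case E: (tidx d j) => [|t]; first by rewrite psum0.
  have := @before_find _ 0 (fun t => j <= psum d t.+1) (iota 0 (size d)) t.
  rewrite -/(tidx d j) E ltnSn nth_iota /=; last by lia.
  by move=> /(_ isT) /negbT; rewrite -ltnNge.
have := nth_find 0 Hhas; rewrite -/(tidx d j) nth_iota //.
Qed.

Lemma tidx_uniq d j t : t < size d -> psum d t < j <= psum d t.+1 -> tidx d j = t.
Proof.
move=> ts /andP [h1 h2].
have jn : j <= sumn d by rewrite -psum_size; apply: (leq_trans h2); apply: psum_mono.
have [h3 [h4 h5]] := @tidx_spec d j (leq_ltn_trans (leq0n _) h1) jn.
case: (ltngtP (tidx d j) t) => // H.
  have := @psum_mono d _ _ H; lia.
have := @psum_mono d _ _ H; lia.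
Qed.

Definition cnt (g : nat -> bool) j := \sum_(1 <= i < j.+1) (g i : nat).

Lemma cnt0 g : cnt g 0 = 0.
Proof. by rewrite /cnt big_geq. Qed.

Lemma cntS g j : cnt g j.+1 = cnt g j + g j.+1.
Proof. by rewrite /cnt big_nat_recr. Qed.

Lemma cnt_split g a b : a <= b -> cnt g b = cnt g a + \sum_(a.+1 <= i < b.+1) (g i : nat).
Proof. by move=> ab; rewrite /cnt (@big_cat_nat _ _ _ a.+1). Qed.

Lemma cnt_tidx d (g : nat -> bool) m : m <= size d ->
  cnt (fun i => g (tidx d i)) (psum d m) = \sum_(0 <= k < m | g k) nth 0 d k.
Proof.
elim: m => [|m IH] Hm; first by rewrite psum0 cnt0 big_geq.
rewrite (@cnt_split _ (psum d m) _ (@psum_mono d _ _ (leqnSn m))) IH; last by lia.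
rewrite (@eq_big_nat _ _ _ _ _ _ (fun _ => (g m : nat))); last first.
  by move=> i Hi; rewrite (@tidx_uniq d i m) //; lia.
rewrite sum_nat_const_nat [in RHS]big_mkcond big_nat_recr //= -big_mkcond psumS.
case: (g m) => /=; lia.
Qed.

Lemma cnt_tidx_mid d (g : nat -> bool) t j : t < size d -> psum d t < j <= psum d t.+1 ->
  cnt (fun i => g (tidx d i)) j = \sum_(0 <= k < t | g k) nth 0 d k + g t * (j - psum d t).
Proof.
move=> ts Hj.
rewrite (@cnt_split _ (psum d t)); last by lia.
rewrite cnt_tidx; last by lia.
rewrite (@eq_big_nat _ _ _ _ _ _ (fun _ => (g t : nat))); last first.
  by move=> i Hi; rewrite (@tidx_uniq d i t) //; lia.
rewrite sum_nat_const_nat; lia.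
Qed.

Definition bb z d i := (z == odd (tidx d i)).

Lemma vje_cnt z d j : 0 < j <= sumn d ->
  vje z d j = if bb z d j then (cnt (bb z d) j, 0)
              else (0, cnt (fun i => ~~ bb z d i) j).
Proof.
move=> /andP [j0 jn].
have [h1 [h2a h2b]] := @tidx_spec d j j0 jn.
have h2 : psum d (tidx d j) < j <= psum d (tidx d j).+1 by rewrite h2a h2b.
have E1 := @cnt_tidx_mid d (fun k => z == odd k) _ j h1 h2.
have E2 := @cnt_tidx_mid d (fun k => ~~ (z == odd k)) _ j h1 h2.
rewrite /bb E1 E2 /vje; clear E1 E2.
case: z; case Ho: (odd (tidx d j)) => /=.
- congr (_ + _, _); rewrite ?mul1n //; apply: eq_bigl => k; by case: odd.
- congr (_, _ + _); rewrite ?mul1n //; apply: eq_bigl => k; by case: odd.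
- congr (_, _ + _); rewrite ?mul1n //; apply: eq_bigl => k; by case: odd.
- congr (_ + _, _); rewrite ?mul1n //; apply: eq_bigl => k; by case: odd.
Qed.

Lemma cnt_add g j : cnt g j + cnt (fun i => ~~ g i) j = j.
Proof. elim: j => [|j IH]; first by rewrite !cnt0. rewrite !cntS; case: (g j.+1) => /=; lia. Qed.

Lemma cnt_le g j : cnt g j <= j.
Proof. have := cnt_add g j; lia. Qed.

Lemma cnt_mono g i j : i <= j -> cnt g i <= cnt g j.
Proof. move=> ij; rewrite (@cnt_split g i j ij); lia. Qed.

Lemma cnt_pos (g : nat -> bool) l : g l -> 0 < l -> 0 < cnt g l.
Proof. case: l => // l gl _; rewrite cntS gl /=; lia. Qed.

Lemma cnt_strict (g : nat -> bool) i j : i < j -> g j -> cnt g i < cnt g j.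
Proof.
case: j => // j ij gj; rewrite cntS gj /=; have := @cnt_mono g i j ij; lia.
Qed.

Lemma cnt_hit (g : nat -> bool) j q : 0 < q <= cnt g j -> exists l, [/\ 0 < l <= j, g l & cnt g l = q].
Proof.
elim: j => [|j IH]; first by rewrite cnt0; lia.
rewrite cntS => Hq.
case: (leqP q (cnt g j)) => H.
  have [|l [h1 h2 h3]] := IH; first by lia.
  exists l; split => //; lia.
exists j.+1; split => //.
- lia.
- by case: (g j.+1) Hq H => //=; lia.
- rewrite cntS; lia.
Qed.

Lemma uniq_flatten_map (T S : eqType) (F : T -> seq S) s :
  uniq s -> (forall x, x \in s -> uniq (F x)) ->
  (forall x y w, x \in s -> y \in s -> w \in F x -> w \in F y -> x = y) ->
  uniq (flatten (map F s)).
Proof.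
elim: s => [|x s IH] //= /andP [xs us] HF Hd.
rewrite cat_uniq HF ?mem_head //= IH //; last first.
- by move=> a b w ha hb; apply: Hd; rewrite inE ?ha ?hb orbT.
- by move=> a ha; apply: HF; rewrite inE ha orbT.
rewrite andbT; apply/hasP => -[w /flatten_mapP [y ys wy] wx].
have := Hd x y w (mem_head _ _); rewrite inE ys orbT => /(_ isT wx wy) E.
by rewrite E ys in xs.
Qed.

Lemma pair_inj {A B : Type} {a c : A} {b e : B} : (a, b) = (c, e) -> a = c /\ b = e.
Proof. by case=> -> ->. Qed.

Theorem lemma2p5 (n : nat) (z : bool) (d : seq nat) :
  1 <= n -> Omega n z d ->
  (* (1) *)
      (forall u v : nat * nat, u <> v -> vbar n u <> vbar n v) /\
      (* (2) *)
      (size (Tbar n z d) = lambda2 n) /\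
      (* (3) *)
      (forall j l, 1 <= j <= n ->
         vje z d j = (l, 0) \/ vje z d j = (0, l) -> l <= j) /\
      (* (4) *)
      (forall w, w \in Teta n z d -> (w.1 <= n) /\ (w.2 <= n)) /\
      (* (5) *)
      (forall j p, 1 <= j <= n ->
         (vje z d j = (0, p) ->
            forall q, 1 <= q < p -> exists l, 1 <= l < j /\ vje z d l = (0, q)) /\
         (vje z d j = (p, 0) ->
            forall q, 1 <= q < p -> exists l, 1 <= l < j /\ vje z d l = (q, 0))) /\
      (* (6) *)
      (forall j l, 1 <= j <= n ->
         (vje z d j = (0, l) ->
            [seq vje z d i | i <- iota 1 j] =i
            [seq (0, t) | t <- iota 1 l] ++ [seq (s, 0) | s <- iota 1 (j - l)]) /\
         (vje z d j = (l, 0) ->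
            [seq vje z d i | i <- iota 1 j] =i
            [seq (0, t) | t <- iota 1 (j - l)] ++ [seq (s, 0) | s <- iota 1 l])).
Proof.
move=> n1 /and4P [_ _ _ /eqP Hs].
have HV : forall j, 0 < j <= n -> vje z d j =
    if bb z d j then (cnt (bb z d) j, 0) else (0, cnt (fun i => ~~ bb z d i) j).
  by move=> j Hj; apply: vje_cnt; rewrite Hs.
have Hadd := cnt_add (bb z d).
have HX := cnt_le (bb z d).
have HY := cnt_le (fun i => ~~ bb z d i).
have HXp := @cnt_pos (bb z d).
have HYp := @cnt_pos (fun i => ~~ bb z d i).
have P1 : forall u v : nat * nat, u <> v -> vbar n u <> vbar n v.
  move=> [u1 u2] [v1 v2] uv E; apply: uv.
  have m10 : (1, 0) \in Lambda2 n.
    rewrite /Lambda2 mem_filter; apply/andP; split; first by rewrite /=; lia.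
    apply/allpairsP; exists (1, 0) => /=.
    split => //; rewrite /= ?inE ?mem_iota /=; lia.
  have m01 : (0, 1) \in Lambda2 n.
    rewrite /Lambda2 mem_filter; apply/andP; split; first by rewrite /=; lia.
    apply/allpairsP; exists (0, 1) => /=.
    split => //; rewrite /= ?inE ?mem_iota /=; lia.
  move/eq_in_map: E => E.
  have := E _ m10; have := E _ m01; rewrite /= !bin1 !bin0 !muln1 !mul1n.
  by move=> -> ->.
have Vinj : forall i j, 0 < i <= n -> 0 < j <= n -> vje z d i = vje z d j -> i = j.
  move=> i j Hi Hj; rewrite (HV i Hi) (HV j Hj).
  case bi: (bb z d i); case bj: (bb z d j) => /pair_inj [E1 E2].
  - case: (ltngtP i j) => // H.
      by have := @cnt_strict (bb z d) _ _ H bj; lia.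
    by have := @cnt_strict (bb z d) _ _ H bi; lia.
  - have := HXp i bi; lia.
  - have := HXp j bj; lia.
  - case: (ltngtP i j) => // H.
      by have := @cnt_strict (fun i => ~~ bb z d i) _ _ H; rewrite bj /=; lia.
    by have := @cnt_strict (fun i => ~~ bb z d i) _ _ H; rewrite bi /=; lia.
have Vaxis : forall j, 0 < j <= n -> (vje z d j).1 != (vje z d j).2.
  move=> j Hj; rewrite (HV j Hj); case bj: (bb z d j) => /=.
    by have := HXp j bj; lia.
  by have := HYp j; rewrite bj /=; lia.
have Vle : forall j, 0 < j <= n -> (vje z d j).1 <= j /\ (vje z d j).2 <= j.
  move=> j Hj; rewrite (HV j Hj); case: (bb z d j) => /=; split => //; lia.
split => //.
split.
  have injv : injective (vbar n).
    by move=> u v E; case: (u =P v) => // /P1.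
  have uT : uniq (Teta n z d).
    rewrite /Teta cat_uniq; apply/and3P; split.
    - by rewrite map_inj_uniq ?iota_uniq // => p q [].
    - apply/hasP => -[w /flatten_mapP [j Hj Hw] /mapP [p _ Ew]].
      move: Hw; rewrite Ew /Tj => /mapP [q _ /pair_inj [E1 E2]].
      have := Vaxis j; rewrite mem_iota in Hj; move/(_ ltac:(lia)); lia.
    - apply: uniq_flatten_map; first exact: iota_uniq.
        by move=> j _; rewrite map_inj_uniq ?iota_uniq // => p q [] /eqP; rewrite eqn_add2l => /eqP.
      move=> x y w; rewrite !mem_iota => Hx Hy /mapP [p _ ->] /mapP [q _ /pair_inj [E1 E2]].
      apply: Vinj; try lia.
      rewrite (HV x) ?(HV y) in E1 E2 *; try lia.
      case bx: (bb z d x) E1 E2; case by_: (bb z d y) => /= E1 E2.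
      + by congr (_, _); lia.
      + have := HXp x bx; lia.
      + have := HXp y by_; lia.
      + by congr (_, _); lia.
  rewrite /Tbar undup_id; last by rewrite map_inj_uniq.
  rewrite size_map /Teta size_cat size_map size_iota size_flatten /shape -map_comp.
  rewrite (@eq_map _ _ _ (fun j => (n - j).+1)); last first.
    by move=> j /=; rewrite size_map size_iota.
  rewrite sumnE big_map.
  have -> : iota 1 n = index_iota 1 n.+1 by rewrite /index_iota subSS subn0.
  rewrite big_nat_rev /= (@eq_big_nat _ _ _ _ _ _ (fun i => i)); last first.
    move=> i Hi; lia.
  rewrite [X in _ + X = _](_ : _ = \sum_(0 <= i < n.+1) i); last first.
    by rewrite [in RHS]big_ltn.
  rewrite bin2_sum /lambda2 !binS !bin1 ?bin0; lia.
split.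
  move=> j l Hj; rewrite (HV j Hj).
  have := HX j; have := HY j.
  case: (bb z d j) => /= h1 h2 [] /pair_inj [E1 E2]; lia.
split.
  move=> w; rewrite /Teta mem_cat => /orP [].
    by move=> /mapP [p]; rewrite mem_iota => Hp -> /=; split; lia.
  move=> /flatten_mapP [j]; rewrite mem_iota => Hj /mapP [p]; rewrite mem_iota => Hp ->.
  have := Vle j; move/(_ ltac:(lia)) => /= [h1 h2]; split; lia.
have Mem : forall j, j <= n -> [seq vje z d i | i <- iota 1 j] =i
    [seq (0, t) | t <- iota 1 (cnt (fun i => ~~ bb z d i) j)] ++
    [seq (s, 0) | s <- iota 1 (cnt (bb z d) j)].
  move=> j jn x; apply/idP/idP.
    move=> /mapP [i]; rewrite mem_iota => Hi ->.
    rewrite (HV i) ?mem_cat; last by lia.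
    case bi: (bb z d i); apply/orP; [right|left]; apply/mapP.
      exists (cnt (bb z d) i) => //; rewrite mem_iota.
      have := HXp i bi; have := @cnt_mono (bb z d) i j; lia.
    exists (cnt (fun i => ~~ bb z d i) i) => //; rewrite mem_iota.
    have := HYp i; have := @cnt_mono (fun i => ~~ bb z d i) i j; rewrite bi /=; lia.
  rewrite mem_cat => /orP [] /mapP [t]; rewrite mem_iota => Ht ->.
    have [|l [h1 h2 h3]] := @cnt_hit (fun i => ~~ bb z d i) j t; first by lia.
    apply/mapP; exists l; first by rewrite mem_iota; lia.
    by rewrite (HV l) ?h3; [move: h2 => /= /negbTE -> | lia].
  have [|l [h1 h2 h3]] := @cnt_hit (bb z d) j t; first by lia.
  apply/mapP; exists l; first by rewrite mem_iota; lia.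
  by rewrite (HV l) ?h3 ?h2 //; lia.
split.
  move=> j p Hj; split; rewrite (HV j Hj).
    case bj: (bb z d j) => /pair_inj [E1 E2] q Hq; first lia.
    case: j Hj bj E2 => [|j] Hj bj E2; first lia.
    have := cntS (fun i => ~~ bb z d i) j; rewrite bj /= => E3.
    have [|l [h1 h2 h3]] := @cnt_hit (fun i => ~~ bb z d i) j q; first by lia.
    exists l; split; first by lia.
    by rewrite (HV l) ?h3; [move: h2 => /= /negbTE -> | lia].
  case bj: (bb z d j) => /pair_inj [E1 E2] q Hq; last lia.
  case: j Hj bj E1 => [|j] Hj bj E1; first lia.
  have := cntS (bb z d) j; rewrite bj /= => E3.
  have [|l [h1 h2 h3]] := @cnt_hit (bb z d) j q; first by lia.
  exists l; split; first by lia.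
  by rewrite (HV l) ?h3 ?h2 //; lia.
move=> j l Hj; split; move=> E; move: (E); rewrite (HV j Hj).
  case bj: (bb z d j) => /pair_inj [E1 E2]; first by have := HXp j bj; lia.
  move: (Hadd j) => E3.
  rewrite (_ : j - l = cnt (bb z d) j); last by lia.
  by rewrite -E2; apply: Mem; lia.
case bj: (bb z d j) => /pair_inj [E1 E2]; last by have := HYp j; rewrite bj /=; lia.
move: (Hadd j) => E3.
rewrite (_ : j - l = cnt (fun i => ~~ bb z d i) j); last by lia.
by rewrite -E1; apply: Mem; lia.
Qed.
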